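(* Let $N\ge3$. Consider item types: type $(i,7)$ for $1\le i\le N$ with size $\frac1{7^i}$ and weight $\frac1{7^{i-1}}$, and types $j\in\{1,2,3\}$ with size $\frac1j$ and weight $2$. In the arrival order $(N,7),(N-1,7),\dots,(1,7),3,2,1$ (with $1$-items) and $(N,7),\dots,(1,7),3,2$ (without $1$-items), define: $W_i$ (resp. $V_i$) is the maximum total weight of a feasible bin using only items of types that arrive not earlier than type $(i,7)$ in the first (resp. second) order; $A_j$ (resp. $B_j$) is the maximum total weight of a feasible bin using only items of types arriving not earlier than type $j$ in the first (resp. second) order. Then $A_1=2$, $A_2=B_2=4$, $A_3=B_3=6$, and $W_k=V_k=9-\frac1{7^{k-1}}$ for every $1\le k\le N$.
   Context: A feasible bin is a finite multiset of items (each item of one of the listed types, arbitrary multiplicities) such that when the items are arranged according to the arrival order of their types, the total size of all items except the last one is strictly below $1$ (this is the Ordered Open End Bin Packing rule: an item may be added to a bin only while the bin's current total size is strictly below $1$). The weight of a bin is the sum of the weights of its items. Thus ''types arriving not earlier than $(i,7)$'' in the first order are $(i,7),(i-1,7),\dots,(1,7),3,2,1$, and in the second order $(i,7),\dots,(1,7),3,2$. *)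

(* Defs.v *)
From HB Require Import structures.
From mathcomp Require Import all_boot all_order all_algebra.
Set Implicit Arguments. Unset Strict Implicit. Unset Printing Implicit Defensive.
Import Order.TTheory GRing.Theory Num.Theory.
Local Open Scope ring_scope.

(* Item types: [T7 i] is type (i,7); [TJ j] is type j (j in {1,2,3}). *)
Inductive itype := T7 of nat | TJ of nat.

Definition code_itype (t : itype) : bool * nat :=
  match t with T7 i => (true, i) | TJ j => (false, j) end.
Definition decode_itype (p : bool * nat) : itype :=
  if p.1 then T7 p.2 else TJ p.2.
Lemma code_itypeK : cancel code_itype decode_itype.
Proof. by case. Qed.
HB.instance Definition _ := Equality.copy itype (can_type code_itypeK).

Definition isize (t : itype) : rat :=
  match t with T7 i => 1 / 7%:R ^+ i | TJ j => 1 / j%:R end.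
Definition iweight (t : itype) : rat :=
  match t with T7 i => 1 / 7%:R ^+ i.-1 | TJ _ => 2 end.

Definition order1 (N : nat) : seq itype :=
  [seq T7 (N - k) | k <- iota 0 N] ++ [:: TJ 3; TJ 2; TJ 1].
Definition order2 (N : nat) : seq itype :=
  [seq T7 (N - k) | k <- iota 0 N] ++ [:: TJ 3; TJ 2].

(* A bin is a finite multiset of items, represented by a list of item types
   (order irrelevant). Arrange it according to the arrival order [ord]. *)
Definition arrange (ord : seq itype) (B : seq itype) : seq itype :=
  sort (fun a b => (index a ord <= index b ord)%N) B.

(* Ordered Open End rule: total size of all items but the last (in arrival
   arrangement) is strictly below 1. *)
Definition feasible (ord : seq itype) (B : seq itype) : Prop :=
  let s := arrange ord B in
  \sum_(x <- take (size s).-1 s) isize x < 1.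

Definition bin_weight (B : seq itype) : rat := \sum_(x <- B) iweight x.

Definition not_earlier (ord : seq itype) (t : itype) : seq itype :=
  drop (index t ord) ord.

Definition admissible (ord : seq itype) (t : itype) (B : seq itype) : Prop :=
  all (fun x => x \in not_earlier ord t) B /\ feasible ord B.

Definition is_max_weight (ord : seq itype) (t : itype) (v : rat) : Prop :=
  (exists B, admissible ord t B /\ bin_weight B = v) /\
  (forall B, admissible ord t B -> bin_weight B <= v).

(* Main.v *)
Require Import Defs.
From HB Require Import structures.
From mathcomp Require Import all_boot all_order all_algebra.
From mathcomp Require Import ring lra zify.
Import Order.TTheory GRing.Theory Num.Theory.
Local Open Scope ring_scope.

Lemma iweight_le2 x : iweight x <= 2.
Proof.
case: x => [i|j] /=; last by [].
apply: (@le_trans _ _ 1); last by [].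
rewrite mul1r invf_le1; first by apply: exprn_ege1.
by apply: exprn_gt0.
Qed.

Lemma ub ord t B (b : rat) (Q : pred itype) :
  admissible ord t B ->
  {subset not_earlier ord t <= Q} ->
  (forall p : seq itype, all Q p -> \sum_(x <- p) isize x < 1 ->
     \sum_(x <- p) iweight x <= b) ->
  bin_weight B <= b + 2.
Proof.
move=> [hall hfeas] hsub hp.
have b0 : 0 <= b by have := hp [::] isT; rewrite !big_nil; apply.
move: hfeas; rewrite /feasible /bin_weight.
have ps : perm_eq (arrange ord B) B by rewrite /arrange perm_sort.
rewrite -(perm_big _ ps).
have allQ : all Q (arrange ord B).
  apply/allP => x; rewrite (perm_mem ps) => xB; apply: hsub; exact: (allP hall x xB).
move: (arrange ord B) allQ => s.
case/lastP: s => [|p x] allQ hfeas.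
  by rewrite big_nil; lra.
move: hfeas allQ; rewrite size_rcons /= -cats1 take_size_cat // all_cat /= andbT => hf /andP [hQ _].
rewrite big_cat big_seq1; apply: lerD; [exact: hp | exact: iweight_le2].
Qed.

Lemma sum_ge_count (Q : pred itype) (c : rat) p :
  (forall x, Q x -> c <= isize x) -> all Q p ->
  (size p)%:R * c <= \sum_(x <- p) isize x.
Proof.
move=> hc; elim: p => [|x p IH] /=; first by rewrite big_nil mul0r.
move=> /andP [qx qp]; rewrite big_cons -addn1 natrD mulrDl mul1r.
have := hc x qx; have := IH qp; lra.
Qed.

Lemma sum_w_count (Q : pred itype) p :
  (forall x, Q x -> iweight x = 2) -> all Q p ->
  \sum_(x <- p) iweight x = (size p)%:R * 2.
Proof.
move=> hc; elim: p => [|x p IH] /=; first by rewrite big_nil mul0r.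
move=> /andP [qx qp]; rewrite big_cons -addn1 natrD mulrDl mul1r hc // IH //; lra.
Qed.

Definition QJ (m : nat) (x : itype) : bool :=
  if x is TJ j then (0 < j <= m)%N else false.
Lemma prefJ (m : nat) p : (0 < m)%N -> all (QJ m) p ->
  \sum_(x <- p) isize x < 1 -> \sum_(x <- p) iweight x <= (m.-1)%:R * 2.
Proof.
move=> m0 hp hs.
rewrite (sum_w_count (QJ m)) //; last by case=> //.
have hc : forall x, QJ m x -> 1 / m%:R <= isize x.
  case=> // j /= /andP [j0 jm].
  rewrite !mul1r lef_pV2 ?ler_nat // posrE ltr0n //.
have h := sum_ge_count (QJ m) (1 / m%:R) p hc hp.
have : (size p)%:R * (1 / m%:R) < 1 :> rat by apply: le_lt_trans hs.
rewrite mul1r ltr_pdivrMr ?ltr0n // mul1r ltr_nat => hlt.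
rewrite ler_pM2r // ler_nat; lia.
Qed.

Definition Q7 (k : nat) (x : itype) : bool :=
  match x with T7 i => (0 < i <= k)%N | TJ j => (0 < j <= 3)%N end.
Definition nf (k : nat) (x : itype) : nat := if x is T7 i then (7 ^ (k - i))%N else 0%N.
Definition cf (x : itype) : nat := if x is TJ _ then 1%N else 0%N.

Lemma item7 k x : Q7 k x ->
  (nf k x)%:R + (cf x)%:R * (7%:R ^+ k) / 3 <= (7%:R ^+ k) * isize x /\
  (7%:R ^+ k) * iweight x = 7 * (nf k x)%:R + 2 * (cf x)%:R * (7%:R ^+ k) :> rat.
Proof.
case: x => [i|j] /= /andP [h0 h1].
  rewrite natrX; idtac; split.
    have -> : (7%:R ^+ k : rat) = 7%:R ^+ (k - i) * 7%:R ^+ i by rewrite -exprD subnK.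
    rewrite le_eqVlt; apply/orP; left; apply/eqP; field.
    by rewrite expf_neq0.
  have -> : (7%:R ^+ k : rat) = 7%:R ^+ (k - i) * 7%:R ^+ i.-1 * 7.
    rewrite -exprD -exprSr; congr (_ ^+ _); lia.
  field; by rewrite expf_neq0.
rewrite add0r mul1r mulr0 add0r mulr1; split; last by rewrite mulrC.
have Mp : (0 : rat) < 7%:R ^+ k by apply: exprn_gt0.
rewrite mul1r ler_pM2l //.
rewrite lef_pV2 ?ler_nat // posrE ltr0n //.
Qed.

Lemma sum7 k p : all (Q7 k) p ->
  (\sum_(x <- p) nf k x)%:R + (\sum_(x <- p) cf x)%:R * (7%:R ^+ k) / 3
     <= (7%:R ^+ k) * \sum_(x <- p) isize x /\
  (7%:R ^+ k) * \sum_(x <- p) iweight x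
     = 7 * (\sum_(x <- p) nf k x)%:R + 2 * (\sum_(x <- p) cf x)%:R * (7%:R ^+ k) :> rat.
Proof.
elim: p => [|x p IH] /=; first by rewrite !big_nil !mulr0 mul0r; split; lra.
move=> /andP [qx qp]; rewrite !big_cons !natrD !mulrDr.
have [a1 a2] := item7 k x qx; have [b1 b2] := IH qp.
split; last by rewrite a2 b2; ring.
have e : ((nf k x)%:R + (\sum_(j <- p) nf k j)%:R +
   ((cf x)%:R + (\sum_(j <- p) cf j)%:R) * 7%:R ^+ k / 3 : rat) =
   ((nf k x)%:R + (cf x)%:R * (7%:R ^+ k) / 3) +
   ((\sum_(x <- p) nf k x)%:R + (\sum_(x <- p) cf x)%:R * (7%:R ^+ k) / 3).
  ring.
rewrite e; exact: lerD.
Qed.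

Lemma natineq k n c : (1 <= k)%N -> (3 * n + c * 7 ^ k < 3 * 7 ^ k)%N ->
  (7 * n + 2 * c * 7 ^ k + 7 <= 7 * 7 ^ k)%N.
Proof.
move=> k1; have -> : (7 ^ k = 7 * 7 ^ k.-1)%N by rewrite -expnS prednK.
have : (0 < 7 ^ k.-1)%N by rewrite expn_gt0.
move: (7 ^ k.-1)%N => q q0 h.
have : (c <= 2)%N by nia.
case: c h => [|[|[|c]]] h _ //; lia.
Qed.

Lemma pref7 k p : (1 <= k)%N -> all (Q7 k) p ->
  \sum_(x <- p) isize x < 1 -> \sum_(x <- p) iweight x <= 7 - 7 / 7%:R ^+ k.
Proof.
move=> k1 hp hs.
have Mp : (0 : rat) < 7%:R ^+ k by apply: exprn_gt0.
have [h1 h2] := sum7 k p hp.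
set n := (\sum_(x <- p) nf k x)%N in h1 h2.
set c := (\sum_(x <- p) cf x)%N in h1 h2.
have hs' : (7%:R ^+ k : rat) * \sum_(x <- p) isize x < 7%:R ^+ k.
  by rewrite -[X in _ < X]mulr1 ltr_pM2l.
have hn : (3 * n + c * 7 ^ k < 3 * 7 ^ k)%N.
  rewrite -(ltr_nat rat) natrD !natrM natrX; lra.
have := natineq k n c k1 hn; rewrite -(ler_nat rat) !natrD !natrM natrX => hn'.
have e : (7%:R ^+ k : rat) * (7 - 7 / 7%:R ^+ k) = 7 * 7%:R ^+ k - 7.
  field; by rewrite expf_neq0.
rewrite -(ler_pM2l Mp) e; lra.
Qed.

Definition L N := [seq T7 (N - k) | k <- iota 0 N].

Lemma order1E N : order1 N = L N ++ [:: TJ 3; TJ 2; TJ 1]. Proof. by []. Qed.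
Lemma order2E N : order2 N = L N ++ [:: TJ 3; TJ 2]. Proof. by []. Qed.

Lemma TJ_notin N j : TJ j \notin L N.
Proof. by apply/mapP => -[x _]. Qed.

Lemma T7_in N k : (1 <= k <= N)%N -> T7 k \in L N.
Proof.
move=> hk; apply/mapP; exists (N - k)%N; first by rewrite mem_iota; lia.
congr T7; lia.
Qed.

Lemma sizeL N : size (L N) = N.
Proof. by rewrite size_map size_iota. Qed.

Lemma ne_TJ N tl j : not_earlier (L N ++ tl) (TJ j) = drop (index (TJ j) tl) tl.
Proof.
rewrite /not_earlier index_cat (negbTE (TJ_notin N j)) drop_cat sizeL.
by rewrite ltnNge leq_addr /= addKn.
Qed.

Lemma ne_T7 N tl k : (1 <= k <= N)%N ->
  not_earlier (L N ++ tl) (T7 k) = [seq T7 (N - j) | j <- iota (N - k) k] ++ tl.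
Proof.
move=> hk; rewrite /not_earlier.
have -> : L N = [seq T7 (N - j) | j <- iota 0 (N - k)] ++
                [seq T7 (N - j) | j <- iota (N - k) k].
  by rewrite /L -map_cat -iotaD subnK //; lia.
have nin : T7 k \notin [seq T7 (N - j) | j <- iota 0 (N - k)].
  apply/mapP => -[j]; rewrite mem_iota => /andP [_ hj] [e]; lia.
have [k' ek] : exists k', k = k'.+1 by exists k.-1; lia.
have hB : [seq T7 (N - j) | j <- iota (N - k) k] =
          T7 k :: [seq T7 (N - j) | j <- iota (N - k).+1 k'].
  rewrite {2}ek /=; congr (_ :: _); congr T7; lia.
rewrite -catA index_cat (negbTE nin) hB /= eqxx addn0 drop_size_cat //.
Qed.

Lemma arrange_sorted ord B :
  sorted (fun a b => (index a ord <= index b ord)%N) B -> arrange ord B = B.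
Proof. by apply: sorted_sort => y x z; apply: leq_trans. Qed.

Lemma sorted_nseq_cat (r : rel itype) n x y : r x x -> r x y ->
  sorted r (nseq n x ++ [:: y]).
Proof.
move=> rxx rxy; case: n => [|n] //=.
elim: n => [|n IH] /=; first by rewrite rxy.
by rewrite rxx IH.
Qed.

Lemma sum_nseq (F : itype -> rat) n a : \sum_(x <- nseq n a) F x = n%:R * F a.
Proof.
elim: n => [|n IH]; first by rewrite big_nil mul0r.
by rewrite [nseq _ _]/= big_cons IH -add1n natrD mulrDl mul1r.
Qed.

Lemma all_subset (Q : pred itype) s : all Q s -> {subset s <= Q}.
Proof. by move=> h x hx; exact: (allP h x hx). Qed.

Lemma sorted_nseq (r : rel itype) n x : r x x -> sorted r (nseq n x).
Proof.
move=> rxx; case: n => [|n] //=.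
by elim: n => [|n IH] //=; rewrite rxx IH.
Qed.

Lemma maxJ N tl m v : (1 <= m <= 3)%N ->
  all (QJ m) (drop (index (TJ m) tl) tl) ->
  all (fun x => x \in drop (index (TJ m) tl) tl) (nseq m (TJ m)) ->
  (m.-1)%:R * 2 + 2 = v ->
  is_max_weight (L N ++ tl) (TJ m) v.
Proof.
move=> hm hQ hin hv; split.
  exists (nseq m (TJ m)); split; last first.
    rewrite /bin_weight sum_nseq /= -hv.
    by case: m hm {hQ hin hv} => [|[|[|[|]]]] //= _; lra.
  split; first by rewrite ne_TJ.
  rewrite /feasible arrange_sorted; last by apply: sorted_nseq.
  rewrite size_nseq take_nseq ?leq_pred // (sum_nseq isize) /=.
  by case: m hm {hQ hin hv} => [|[|[|[|]]]] //= _; lra.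
move=> B hB; rewrite -hv; apply: (@ub _ _ _ _ (QJ m) hB).
  by rewrite ne_TJ; apply: all_subset.
move=> p hp hs; apply: prefJ => //; lia.
Qed.

Lemma max7 N tl k : (1 <= k <= N)%N -> TJ 2 \in tl -> all (Q7 k) tl ->
  is_max_weight (L N ++ tl) (T7 k) (9 - 1 / 7%:R ^+ k.-1).
Proof.
move=> hk h2 hQ.
have Mp : (0 : rat) < 7%:R ^+ k by apply: exprn_gt0.
have eM : (7%:R ^+ k : rat) = 7%:R ^+ k.-1 * 7 by rewrite -exprSr prednK //; lia.
have n1 : (1 <= 7 ^ k)%N by rewrite expn_gt0.
split.
  exists (nseq (7 ^ k - 1) (T7 k) ++ [:: TJ 2]); split; last first.
    rewrite /bin_weight big_cat big_seq1 sum_nseq /= natrB // natrX eM.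
    field; by rewrite expf_neq0.
  split.
    rewrite ne_T7 // all_cat all_nseq /= andbT !mem_cat h2 orbT andbT.
    apply/orP; right; apply/orP; left.
    apply/mapP; exists (N - k)%N; first by rewrite mem_iota; lia.
    congr T7; lia.
  rewrite /feasible arrange_sorted; last first.
    apply: sorted_nseq_cat => //.
    rewrite !index_cat (T7_in N k hk) (negbTE (TJ_notin N 2)).
    apply: leq_trans (ltnW _) (leq_addr _ _).
    by rewrite index_mem (T7_in N k hk).
  rewrite size_cat size_nseq addn1 /= take_size_cat ?size_nseq //.
  rewrite sum_nseq /= natrB // natrX.
  have e : ((7%:R ^+ k - 1) * (1 / 7%:R ^+ k) : rat) = 1 - 1 / 7%:R ^+ k.
    field; by rewrite expf_neq0.
  rewrite e; have : (0 : rat) < 1 / 7%:R ^+ k by rewrite mul1r invr_gt0.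
  lra.
move=> B hB.
have -> : (9 - 1 / 7%:R ^+ k.-1 : rat) = (7 - 7 / 7%:R ^+ k) + 2.
  rewrite eM; field; by rewrite expf_neq0.
apply: (@ub _ _ _ _ (Q7 k) hB).
  rewrite ne_T7 //; apply: all_subset; rewrite all_cat hQ andbT all_map.
  apply/allP => j; rewrite mem_iota => hj /=; lia.
move=> p hp hs; apply: pref7 => //; lia.
Qed.

Theorem mainTheorem12 (N : nat) (HN : (3 <= N)%N) :
  [/\ is_max_weight (order1 N) (TJ 1) 2,
      is_max_weight (order1 N) (TJ 2) 4 /\ is_max_weight (order2 N) (TJ 2) 4,
      is_max_weight (order1 N) (TJ 3) 6 /\ is_max_weight (order2 N) (TJ 3) 6
    & forall k : nat, (1 <= k <= N)%N ->
        is_max_weight (order1 N) (T7 k) (9 - 1 / 7%:R ^+ k.-1) /\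
        is_max_weight (order2 N) (T7 k) (9 - 1 / 7%:R ^+ k.-1)].
Proof.
rewrite order1E order2E; split.
- by apply: maxJ => //=; lra.
- by split; apply: maxJ => //=; lra.
- by split; apply: maxJ => //=; lra.
- by move=> k hk; split; apply: max7.
Qed.
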